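(* Let $\mathcal H=(\{H_i\}_{i\in[k]};\mathcal Q_1,\dots,\mathcal Q_n)$ be a finite multi-sorted structure in which every sort $H_i$ occurs among $\mathcal Q_1,\dots,\mathcal Q_n$ as a unary relation, and let $p$ be a prime. Then: (1) $\mathcal H$ has a Mal'tsev polymorphism if and only if $b(\mathcal H)$ has a Mal'tsev polymorphism; (2) $\mathcal H$ is $p$-rigid if and only if $b(\mathcal H)$ is $p$-rigid; (3) if $\mathcal H$ is strongly $p$-rectangular, then so is $b(\mathcal H)$.
   Context: The binarization $b(\mathcal H)$ is the multi-sorted structure whose sorts are the relations $\mathcal Q_1,\dots,\mathcal Q_n$ (as sets of tuples) and whose relations are, for all $i\le j$, $s\in[\mathrm{ar}(\mathcal Q_i)]$, $t\in[\mathrm{ar}(\mathcal Q_j)]$, $\mathcal R^{ij}_{st}=\{(\mathbf a,\mathbf b):\mathbf a\in\mathcal Q_i,\mathbf b\in\mathcal Q_j,\mathbf a[s]=\mathbf b[t]\}\subseteq\mathcal Q_i\times\mathcal Q_j$. A Mal'tsev polymorphism of a multi-sorted structure is a family $f=\{f_i\}$, $f_i:H_i^3\to H_i$, each satisfying $f_i(a,a,b)=f_i(b,a,a)=b$, such that applying $f$ coordinatewise (with $f_{i_j}$ in a coordinate of sort $i_j$) to any three tuples of any relation gives a tuple of that relation. $p$-rigid: no automorphism $\pi=\{\pi_i\}$ of order $p$ (each $\pi_i$ identity or of order $p$, not all identity). $\langle\mathcal H\rangle_p$: relations defined by formulas $\exists^{\equiv p}\mathbf y_1\cdots\exists^{\equiv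 p}\mathbf y_s\Phi$, $\Phi$ a conjunction of atomic formulas (relations of $\mathcal H$, equality on a sort), respecting sorts, where $\exists^{\equiv p}\mathbf y\Psi(\mathbf x,\mathbf y)$ holds at $\mathbf a$ iff the number of $\mathbf b$ with $\Psi(\mathbf a,\mathbf b)$ is not divisible by $p$. A relation of arity $m\ge2$ is rectangular if for every nonempty $I\subsetneq[m]$, $(\mathbf a,\mathbf c),(\mathbf a,\mathbf d),(\mathbf b,\mathbf c)\in\mathcal R$ implies $(\mathbf b,\mathbf d)\in\mathcal R$ ($\mathbf a,\mathbf b$ on $I$, $\mathbf c,\mathbf d$ on the complement). Strongly $p$-rectangular: every relation of arity $\ge2$ in $\langle\mathcal H\rangle_p$ is rectangular. *)

(* Defs.v *)
From mathcomp Require Import all_boot all_order all_fingroup.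
Set Implicit Arguments. Unset Strict Implicit. Unset Printing Implicit Defensive.

Unset Implicit Arguments.
Record msstr := MSStr {
  ms_S : finType;
  ms_sort : ms_S -> finType;
  ms_RI : Type;
  ms_ar : ms_RI -> nat;
  ms_sig : forall r, 'I_(ms_ar r) -> ms_S;
  ms_rel : forall r, pred {dffun forall j : 'I_(ms_ar r), ms_sort (ms_sig r j)}
}.
Set Implicit Arguments.
Arguments ms_sort M s : rename.
Arguments ms_ar M r : rename.
Arguments ms_sig M r j : rename.
Arguments ms_rel M r _ : rename.

Definition tup (M : msstr) (r : ms_RI M) :=
  {dffun forall j : 'I_(ms_ar M r), ms_sort M (ms_sig M r j)}.

Definition scast (S : Type) (T : S -> Type) (s1 s2 : S) (e : s1 = s2) (x : T s1)
  : T s2 := ecast z (T z) e x.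

Definition hEq (S : eqType) (T : S -> eqType) (s1 s2 : S) (x : T s1) (y : T s2)
  : bool :=
  match s1 =P s2 with
  | ReflectT e => @scast S T s1 s2 e x == y
  | ReflectF _ => false
  end.

Definition maltsev_pol (M : msstr)
  (f : forall s, ms_sort M s -> ms_sort M s -> ms_sort M s -> ms_sort M s) :=
  (forall s (a b : ms_sort M s), f s a a b = b /\ f s b a a = b) /\
  (forall r (x y z : @tup M r), ms_rel M r x -> ms_rel M r y -> ms_rel M r z ->
     ms_rel M r (finfun (fun j => f (ms_sig M r j) (x j) (y j) (z j)) : @tup M r)).

Definition has_maltsev (M : msstr) := exists f, @maltsev_pol M f.

Definition ms_aut (M : msstr) (pi : forall s, {perm ms_sort M s}) :=
  forall r (x : @tup M r),
    ms_rel M r x = ms_rel M r (finfun (fun j => pi (ms_sig M r j) (x j)) : @tup M r).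

Definition aut_of_order (p : nat) (M : msstr) (pi : forall s, {perm ms_sort M s}) :=
  ms_aut pi /\ (forall s, pi s = 1%g \/ #[pi s]%g = p) /\ (exists s, pi s != 1%g).

Definition p_rigid (p : nat) (M : msstr) := ~ exists pi, @aut_of_order p M pi.

Inductive atom (M : msstr) (V : finType) (vs : V -> ms_S M) :=
| ARel (r : ms_RI M) (args : 'I_(ms_ar M r) -> V)
       (h : forall j, vs (args j) = ms_sig M r j)
| AEq (u v : V) (h : vs u = vs v).

Definition assign (M : msstr) (V : finType) (vs : V -> ms_S M) :=
  {dffun forall v : V, ms_sort M (vs v)}.

Definition atom_sat (M : msstr) (V : finType) (vs : V -> ms_S M)
  (a : assign vs) (t : atom vs) : bool :=
  match t with
  | ARel r args h =>
      ms_rel M r (finfun (fun j => @scast _ (ms_sort M) _ _ (h j) (a (args j))) : @tup M r)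
  | AEq u v h => @scast _ (ms_sort M) _ _ h (a u) == a v
  end.

(* blocks_sat p Phi [:: B1; ...; Bs] a  is the value at (the restriction
   to the variables outside B1,...,Bs of) a of
      exists^{=p} B1 ... exists^{=p} Bs Phi,
   where exists^{=p} y Psi holds iff the number of values of y satisfying
   Psi is not divisible by p. *)
Fixpoint blocks_sat (p : nat) (M : msstr) (V : finType) (vs : V -> ms_S M)
  (Phi : assign vs -> bool) (bs : seq {set V}) (a : assign vs) : bool :=
  match bs with
  | [::] => Phi a
  | B :: rest =>
      #|[pred b : assign vs |
          [forall v, (v \notin B) ==> (b v == a v)] && blocks_sat p Phi rest b]|
        %% p != 0
  end.

(* A p-definition of an m-ary relation: free variables fv 0,...,fv (m-1)
   (distinct), quantifier blocks (outermost first), and a conjunction of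
   atoms; every variable is either free or bound by exactly one block. *)
Record ppdef (M : msstr) (m : nat) := PPDef {
  pd_V : finType;
  pd_vs : pd_V -> ms_S M;
  pd_fv : 'I_m -> pd_V;
  pd_blocks : seq {set pd_V};
  pd_atoms : seq (atom pd_vs);
  pd_fv_inj : injective pd_fv;
  pd_part : forall v,
     ((v \in codom pd_fv) : nat) + count (fun B : {set pd_V} => v \in B) pd_blocks = 1
}.

Definition pd_tup (M : msstr) (m : nat) (D : ppdef M m) :=
  {dffun forall j : 'I_m, ms_sort M (pd_vs (pd_fv D j))}.

Definition pd_rel (p : nat) (M : msstr) (m : nat) (D : ppdef M m) (x : pd_tup D)
  : bool :=
  [exists a : assign (@pd_vs _ _ D),
     [forall j, a (pd_fv D j) == x j] &&
     blocks_sat p (fun b => all (atom_sat b) (pd_atoms D)) (pd_blocks D) a].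

Definition rectangular (m : nat) (T : 'I_m -> finType)
  (R : pred {dffun forall j : 'I_m, T j}) :=
  forall I : {set 'I_m}, I != set0 -> I != setT ->
  forall t1 t2 t3 t4 : {dffun forall j : 'I_m, T j},
    (forall j, j \in I -> t1 j = t2 j /\ t3 j = t4 j) ->
    (forall j, j \notin I -> t1 j = t3 j /\ t2 j = t4 j) ->
    R t1 -> R t2 -> R t3 -> R t4.

Definition strongly_p_rect (p : nat) (M : msstr) :=
  forall m (D : ppdef M m), 2 <= m -> rectangular (@pd_rel p M m D).

Section Pres.
Local Unset Implicit Arguments.
Variables (k : nat) (H : 'I_k -> finType) (n : nat) (ar : 'I_n -> nat)
  (sig : forall r : 'I_n, 'I_(ar r) -> 'I_k)
  (Q : forall r : 'I_n, pred {dffun forall j : 'I_(ar r), H (sig r j)}).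

Definition mkH : msstr := @MSStr 'I_k H 'I_n ar sig Q.

Definition bsort (i : 'I_n) : finType :=
  {x : {dffun forall j : 'I_(ar i), H (sig i j)} | Q i x}.

Record bidx := BIdx {
  bi : 'I_n; bj : 'I_n; bs : 'I_(ar bi); bt : 'I_(ar bj); ble : (bi <= bj)%N }.

Definition bsig (r : bidx) (c : 'I_2) : 'I_n := if val c == 0 then bi r else bj r.

Definition brel (r : bidx) (u : {dffun forall c : 'I_2, bsort (bsig r c)}) : bool :=
  @hEq 'I_k (fun i => H i : eqType) _ _ (val (u ord0) (bs r)) (val (u ord_max) (bt r)).

Definition binarize : msstr :=
  @MSStr 'I_n bsort bidx (fun _ => 2) bsig brel.
End Pres.
Arguments mkH {k H n ar sig} Q.
Arguments binarize {k H n ar sig} Q.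

(* Main.v *)
Require Import Defs.
From mathcomp Require Import all_boot all_order all_fingroup.
From mathcomp Require Import cyclic.
From Stdlib Require List.
From mathcomp Require Import zify.

Set Implicit Arguments. Unset Strict Implicit. Unset Printing Implicit Defensive.

Section Tg.
Variables (k : nat) (H : 'I_k -> finType).
Local Notation tg := (Tagged H).

Lemma hEqE (i j : 'I_k) (x : H i) (y : H j) :
  @hEq 'I_k (fun i => H i : eqType) i j x y = (tg x == tg y).
Proof.
rewrite /hEq; case: eqP => [e|ne].
  by move: y; case: j / e => y /=; rewrite eq_Tagged.
apply/esym/negbTE; apply/eqP => /(congr1 tag) /=; exact: ne.
Qed.

Lemma tg_inj (i : 'I_k) (x y : H i) : tg x = tg y -> x = y.
Proof. by move/eqP; rewrite eq_Tagged => /eqP. Qed.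

Lemma tg_scast (i j : 'I_k) (e : i = j) (x : H i) :
  tg (@scast _ (fun i => H i) _ _ e x) = tg x.
Proof. by case: j / e. Qed.

Lemma tgF (F : forall i, H i -> H i) (i j : 'I_k) (e : i = j) (x : H i) :
  tg (F j (@scast _ (fun i => H i) _ _ e x)) = tg (F i x).
Proof. by case: j / e. Qed.

Lemma tg_tag (i j : 'I_k) (x : H i) (y : H j) : tg x = tg y -> i = j.
Proof. exact: (congr1 tag). Qed.

Lemma tg3 (f : forall i, H i -> H i -> H i -> H i) (i1 i2 : 'I_k)
  (x1 y1 z1 : H i1) (x2 y2 z2 : H i2) :
  tg x1 = tg x2 -> tg y1 = tg y2 -> tg z1 = tg z2 ->
  tg (f i1 x1 y1 z1) = tg (f i2 x2 y2 z2).
Proof.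
move=> e; have ei := tg_tag e; subst i2.
by move: e => /tg_inj -> /tg_inj -> /tg_inj ->.
Qed.

Lemma tg1 (f : forall i, H i -> H i) (i1 i2 : 'I_k) (x1 : H i1) (x2 : H i2) :
  tg x1 = tg x2 -> tg (f i1 x1) = tg (f i2 x2).
Proof. move=> e; have ei := tg_tag e; subst i2. by move: e => /tg_inj ->. Qed.

Lemma tg1_inj (f : forall i, H i -> H i) (i1 i2 : 'I_k) (x1 : H i1) (x2 : H i2) :
  (forall i, injective (f i)) ->
  tg (f i1 x1) = tg (f i2 x2) -> tg x1 = tg x2.
Proof.
move=> fi e; have ei := tg_tag e; subst i2.
by move: e => /tg_inj /fi ->.
Qed.
End Tg.

Section Bin.
Local Unset Implicit Arguments.
Variables (k : nat) (H : 'I_k -> finType) (n : nat) (ar : 'I_n -> nat)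
  (sig : forall r : 'I_n, 'I_(ar r) -> 'I_k)
  (Q : forall r : 'I_n, pred {dffun forall j : 'I_(ar r), H (sig r j)}).

Local Notation BS := (bsort k H n ar sig Q).
Local Notation tg := (Tagged H).

Definition mk2 (r : bidx n ar) (X : BS (bi n ar r)) (Y : BS (bj n ar r)) :
  {dffun forall c : 'I_2, BS (bsig n ar r c)} :=
  finfun (fun c => match c as c0 return BS (bsig n ar r c0) with
    Ordinal m pf => match m as m0 return forall pf0 : m0 < 2, BS (bsig n ar r (Ordinal pf0)) with
      | 0 => fun _ => X | _.+1 => fun _ => Y end pf end).

Lemma mk2_0 r X Y : mk2 r X Y ord0 = X. Proof. by rewrite ffunE. Qed.
Lemma mk2_1 r X Y : mk2 r X Y ord_max = Y. Proof. by rewrite ffunE. Qed.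

Lemma brelE r (u : {dffun forall c : 'I_2, BS (bsig n ar r c)}) :
  brel k H n ar sig Q r u = (tg (val (u ord0) (bs n ar r)) == tg (val (u ord_max) (bt n ar r))).
Proof. by rewrite /brel hEqE. Qed.

Lemma pres_pair (g : forall l, BS l -> BS l -> BS l -> BS l) :
  (forall r (x y z : @tup (binarize Q) r), ms_rel (binarize Q) r x ->
     ms_rel (binarize Q) r y -> ms_rel (binarize Q) r z ->
     ms_rel (binarize Q) r (finfun (fun j => g (ms_sig (binarize Q) r j) (x j) (y j) (z j)) : @tup (binarize Q) r)) ->
  forall l1 l2 s1 s2 (X1 Y1 Z1 : BS l1) (X2 Y2 Z2 : BS l2),
  tg (val X1 s1) = tg (val X2 s2) -> tg (val Y1 s1) = tg (val Y2 s2) ->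
  tg (val Z1 s1) = tg (val Z2 s2) ->
  tg (val (g l1 X1 Y1 Z1) s1) = tg (val (g l2 X2 Y2 Z2) s2).
Proof.
move=> hg.
suff W : forall l1 l2 s1 s2 (X1 Y1 Z1 : BS l1) (X2 Y2 Z2 : BS l2), l1 <= l2 ->
  tg (val X1 s1) = tg (val X2 s2) -> tg (val Y1 s1) = tg (val Y2 s2) ->
  tg (val Z1 s1) = tg (val Z2 s2) ->
  tg (val (g l1 X1 Y1 Z1) s1) = tg (val (g l2 X2 Y2 Z2) s2).
  move=> l1 l2 s1 s2 X1 Y1 Z1 X2 Y2 Z2 e1 e2 e3.
  case: (leqP l1 l2) => le; first exact: W.
  by symmetry; apply: W => //; exact: ltnW.
move=> l1 l2 s1 s2 X1 Y1 Z1 X2 Y2 Z2 le e1 e2 e3.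
pose r := @BIdx n ar l1 l2 s1 s2 le.
have := hg r (mk2 r X1 X2) (mk2 r Y1 Y2) (mk2 r Z1 Z2).
rewrite /= !brelE !ffunE /= => h; apply/eqP; apply: h; apply/eqP.
- exact: e1.
- exact: e2.
- exact: e3.
Qed.
End Bin.

Section Unary.
Local Unset Implicit Arguments.
Variables (k : nat) (H : 'I_k -> finType) (n : nat) (ar : 'I_n -> nat)
  (sig : forall r : 'I_n, 'I_(ar r) -> 'I_k)
  (Q : forall r : 'I_n, pred {dffun forall j : 'I_(ar r), H (sig r j)}).
Variable ur : 'I_k -> 'I_n.
Hypothesis hur1 : forall i, ar (ur i) = 1.
Hypothesis hur2 : forall i j, sig (ur i) j = i.
Hypothesis hur3 : forall i x, Q (ur i) x.
Local Set Implicit Arguments.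

Local Notation BS := (bsort k H n ar sig Q).
Local Notation tg := (Tagged H).

Definition j0 i : 'I_(ar (ur i)) := cast_ord (esym (hur1 i)) ord0.
Definition emb i (a : H i) : BS (ur i) :=
  Sub (finfun (fun j => @scast _ (fun i => H i) _ _ (esym (hur2 i j)) a)) (hur3 _ _).
Definition ext i (X : BS (ur i)) : H i :=
  @scast _ (fun i => H i) _ _ (hur2 i (j0 i)) (val X (j0 i)).

Lemma j0E i (j : 'I_(ar (ur i))) : j = j0 i.
Proof.
apply: ord_inj; rewrite /j0 /=.
have : (nat_of_ord j < 1)%N by rewrite -(hur1 i) ltn_ord.
by case: (nat_of_ord j).
Qed.

Lemma tg_emb i (a : H i) j : tg (val (emb a) j) = tg a.
Proof. by rewrite /emb SubK ffunE tg_scast. Qed.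

Lemma tg_ext i (X : BS (ur i)) j : tg (ext X) = tg (val X j).
Proof. by rewrite /ext tg_scast (j0E j). Qed.

Lemma ext_emb i (a : H i) : ext (emb a) = a.
Proof. apply: tg_inj. by rewrite (tg_ext _ (j0 i)) tg_emb. Qed.

Lemma emb_ext i (X : BS (ur i)) : emb (ext X) = X.
Proof.
apply: val_inj; apply/ffunP => j; apply: tg_inj.
by rewrite tg_emb (tg_ext _ j).
Qed.

Lemma emb_inj i : injective (@emb i).
Proof. by move=> a b e; rewrite -(ext_emb a) e ext_emb. Qed.

Lemma ext_inj i : injective (@ext i).
Proof. by move=> a b e; rewrite -(emb_ext a) e emb_ext. Qed.

Lemma malt_HtoB : has_maltsev (mkH Q) -> has_maltsev (binarize Q).
Proof.
case=> f [hf1 hf2].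
pose g := fun l (X Y Z : BS l) => (Sub (finfun (fun s => f (sig l s) (val X s) (val Y s) (val Z s)))
   (hf2 l (val X) (val Y) (val Z) (valP X) (valP Y) (valP Z)) : BS l).
have gE : forall l X Y Z s, val (g l X Y Z) s = f (sig l s) (val X s) (val Y s) (val Z s).
  by move=> l X Y Z s; rewrite /g SubK ffunE.
exists g; split.
  move=> l a b.
  split; apply: val_inj; apply/ffunP => s.
    by etransitivity; [exact: gE|]; case: (hf1 (sig l s) (val a s) (val b s)).
  by etransitivity; [exact: gE|]; case: (hf1 (sig l s) (val a s) (val b s)).
move=> r x y z; rewrite /= !brelE !ffunE.
move=> /eqP ex /eqP ey /eqP ez; apply/eqP; exact: tg3.
Qed.

Lemma malt_BtoH : has_maltsev (binarize Q) -> has_maltsev (mkH Q).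
Proof.
case=> g [hg1 hg2].
pose f := fun i (a b c : H i) => ext (g (ur i) (emb a) (emb b) (emb c)).
have key : forall l (X Y Z : BS l) s,
  tg (val (g l X Y Z) s) = tg (f (sig l s) (val X s) (val Y s) (val Z s)).
  move=> l X Y Z s; rewrite /f (tg_ext _ (j0 _)).
  by apply: (@pres_pair _ _ _ _ _ _ _ hg2); rewrite tg_emb.
exists f; split.
  move=> i a b; rewrite /f; case: (hg1 (ur i) (emb a) (emb b)) => -> ->.
  by rewrite ext_emb.
move=> l x y z hx hy hz.
have -> : (finfun (fun j => f (ms_sig (mkH Q) l j) (x j) (y j) (z j)) : @tup (mkH Q) l)
   = val (g l (Sub x hx) (Sub y hy) (Sub z hz)).
  apply/ffunP => s; rewrite ffunE; apply: tg_inj; by rewrite key !SubK.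
exact: valP.
Qed.

Lemma order_p (p : nat) (T : finType) (s : {perm T}) : prime p ->
  (s ^+ p = 1)%g -> s = 1%g \/ #[s]%g = p.
Proof.
move=> pp; move/eqP; rewrite -order_dvdn; case/primeP: pp => _ hp /hp /orP [].
  by rewrite order_eq1 => /eqP; left.
by move/eqP; right.
Qed.

Lemma expp_1 (p : nat) (T : finType) (s : {perm T}) :
  s = 1%g \/ #[s]%g = p -> (s ^+ p = 1)%g.
Proof. by case=> [->|<-]; [rewrite expg1n | rewrite expg_order]. Qed.

Lemma perm_not1 (T : finType) (s : {perm T}) : s != 1%g -> exists x, s x != x.
Proof.
move=> ns; apply/existsP; apply: contraR ns; rewrite negb_exists => /forallP h.
by apply/eqP/permP => x; rewrite perm1; apply/eqP; move: (h x); rewrite negbK.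
Qed.

Lemma rigid_HtoB p : prime p ->
  (exists pi, @aut_of_order p (mkH Q) pi) -> (exists pi, @aut_of_order p (binarize Q) pi).
Proof.
move=> pp [pi [haut [hord [s0 hs0]]]].
have liftP : forall l (X : BS l),
  Q l (finfun (fun s => pi (sig l s) (val X s))).
  move=> l X; have := haut l (val X); rewrite /= => <-; exact: valP.
pose liftv := fun l (X : BS l) => (Sub _ (liftP l X) : BS l).
have liftv_inj : forall l, injective (liftv l).
  move=> l X Y /(congr1 val); rewrite !SubK => e; apply: val_inj; apply/ffunP => s.
  by move/ffunP: e => /(_ s); rewrite !ffunE => /perm_inj.
pose sigm := fun l => perm (liftv_inj l).
have sval_E : forall l X s, val (sigm l X) s = pi (sig l s) (val X s).
  by move=> l X s; rewrite permE SubK ffunE.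
have itE : forall m l X s, val ((sigm l ^+ m)%g X) s = (pi (sig l s) ^+ m)%g (val X s).
  move=> m l X s; rewrite !permX; elim: m => //= m IH.
  by rewrite sval_E IH.
exists sigm; split; [|split].
- move=> r x; rewrite /= !brelE !ffunE !sval_E.
  apply/eqP/eqP; first exact: (@tg1 _ _ (fun i => pi i)).
  by apply: (@tg1_inj _ _ (fun i => pi i)) => i; exact: perm_inj.
- move=> l; apply: order_p => //; apply/permP => X; rewrite perm1.
  apply: val_inj; apply/ffunP => s; rewrite itE.
  by rewrite (expp_1 (hord _)) perm1.
- exists (ur s0); apply/eqP => e.
  have [a ha] := perm_not1 hs0.
  have := congr1 (fun q : {perm BS (ur s0)} => val (q (emb a)) (j0 s0)) e.
  rewrite /= perm1 sval_E => e2.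
  have : tg (pi (sig (ur s0) (j0 s0)) (val (emb a) (j0 s0))) = tg (pi s0 a).
    apply: (@tg1 _ _ (fun i => pi i)); exact: tg_emb.
  rewrite e2 tg_emb => /tg_inj /esym /eqP; by rewrite (negbTE ha).
Qed.

Lemma rigid_BtoH p : prime p ->
  (exists pi, @aut_of_order p (binarize Q) pi) -> (exists pi, @aut_of_order p (mkH Q) pi).
Proof.
move=> pp [sigm [haut [hord [l0 hl0]]]].
pose pi0 := fun i (a : H i) => ext (sigm (ur i) (emb a)).
have pi0_inj : forall i, injective (pi0 i).
  by move=> i a b /ext_inj /perm_inj /emb_inj.
pose pi := fun i => perm (pi0_inj i).
have hpres : forall r (x y z : @tup (binarize Q) r), ms_rel (binarize Q) r x ->
     ms_rel (binarize Q) r y -> ms_rel (binarize Q) r z ->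
     ms_rel (binarize Q) r (finfun (fun j => (fun l (X _ _ : BS l) => sigm l X) (ms_sig (binarize Q) r j) (x j) (y j) (z j)) : @tup (binarize Q) r).
  by move=> r x y z hx _ _; move: hx; rewrite haut; exact: id.
have K : forall l (X : BS l) s, tg (val (sigm l X) s) = tg (pi (sig l s) (val X s)).
  move=> l X s.
  rewrite permE /pi0 (tg_ext _ (j0 _)).
  have := @pres_pair k H n ar sig Q (fun l (X _ _ : BS l) => sigm l X) hpres l (ur (sig l s)) s (j0 _)
     X X X (emb (val X s)) (emb (val X s)) (emb (val X s)).
  by rewrite tg_emb; apply.
have Km : forall m l (X : BS l) s,
   tg (val ((sigm l ^+ m)%g X) s) = tg ((pi (sig l s) ^+ m)%g (val X s)).
  move=> m l X s; rewrite !permX; elim: m => //= m IH.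
  rewrite K; exact: (@tg1 k H (fun i => pi i)).
have valE : forall l (X : BS l),
   val (sigm l X) = finfun (fun j => pi (sig l j) (val X j)).
  move=> l X; apply/ffunP => j; rewrite ffunE; apply: tg_inj; exact: K.
exists pi; split; [|split].
- move=> l x /=; apply/idP/idP => hx.
    by have := valP (sigm l (Sub x hx)); rewrite valE SubK.
  set X' := (Sub _ hx : BS l).
  pose Y := ((sigm l)^-1)%g X'.
  have eY : val (sigm l Y) = val X' by rewrite /Y permKV.
  rewrite valE SubK in eY.
  have -> : x = val Y.
    apply/ffunP => j; move/ffunP: eY => /(_ j); rewrite !ffunE.
    by move/perm_inj.
  exact: valP.
- move=> i; apply: order_p => //; apply/permP => a; rewrite perm1.
  have := Km p (ur i) (emb a) (j0 i).
  rewrite (expp_1 (hord _)) perm1.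
  have := tg_emb a (j0 i) => te.
  rewrite te => e; apply: tg_inj; rewrite e.
  exact: (@tg1 k H (fun i => (pi i ^+ p)%g)).
- have [X hX] := perm_not1 hl0.
  have [s hs] : exists s, val (sigm l0 X) s != val X s.
    apply/existsP; apply: contraR hX; rewrite negb_exists => /forallP h.
    apply/eqP/val_inj/ffunP => s; by apply/eqP; move: (h s); rewrite negbK.
  exists (sig l0 s); apply/eqP => e.
  move: hs; have := K l0 X s; rewrite e perm1 => /tg_inj ->; by rewrite eqxx.
Qed.

End Unary.

Lemma blocks_sat_ex p (M : msstr) (V : finType) (vs : V -> ms_S M)
  (Phi : assign vs -> bool) bs a :
  blocks_sat p Phi bs a -> exists b, Phi b.
Proof.
elim: bs a => [|B bs IH] a /=; first by exists a.
case: (pickP [pred b : assign vs | [forall v, (v \notin B) ==> (b v == a v)] && blocks_sat p Phi bs b]) => [b /andP [_ hb] _|h0].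
  exact: IH hb.
by rewrite (eq_card0 h0) mod0n eqxx.
Qed.

Section Rect.
Local Unset Implicit Arguments.
Variables (k : nat) (H : 'I_k -> finType) (n : nat) (ar : 'I_n -> nat)
  (sig : forall r : 'I_n, 'I_(ar r) -> 'I_k)
  (Q : forall r : 'I_n, pred {dffun forall j : 'I_(ar r), H (sig r j)}).
Variables (p m : nat) (D : ppdef (binarize Q) m).
Local Set Implicit Arguments.

Local Notation BS := (bsort k H n ar sig Q).
Local Notation tg := (Tagged H).
Local Notation V := (pd_V D).
Local Notation vs := (@pd_vs _ _ D).
Local Notation V' := {v : V & 'I_(ar (vs v))}.

Definition vs' (x : V') : ms_S (mkH Q) := sig (vs (tag x)) (tagged x).
Definition tv (v : V) (s : 'I_(ar (vs v))) : V' := Tagged (fun v => 'I_(ar (vs v))) s.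

Definition fl (a : assign vs) : assign vs' :=
  finfun (fun x : V' => val (a (tag x)) (tagged x)).

Lemma flE a v s : fl a (tv s) = val (a v) s.
Proof. by rewrite ffunE. Qed.

Definition qatom (v : V) : atom vs' :=
  @ARel (mkH Q) V' vs' (vs v) (fun s => tv s) (fun s => erefl).

Definition Qok (a' : assign vs') (v : V) : bool :=
  Q (vs v) (finfun (fun s => a' (tv s))).

Lemma qatom_sat a' v : atom_sat a' (qatom v) = Qok a' v.
Proof. by []. Qed.

Lemma sig_cast (i j : 'I_n) (e : i = j) (s : 'I_(ar i)) :
  sig i s = sig j (cast_ord (congr1 ar e) s).
Proof. by case: j / e; rewrite cast_ord_id. Qed.

Definition tr (t : atom vs) : seq (atom vs') :=
  match t with
  | ARel r args h =>
     let s' := cast_ord (congr1 ar (esym (h ord0))) (bs n ar r) in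
     let t' := cast_ord (congr1 ar (esym (h ord_max))) (bt n ar r) in
     match vs' (tv s') =P vs' (tv t') with
     | ReflectT e => [:: @AEq _ _ vs' (tv s') (tv t') e]
     | ReflectF _ => [::]
     end
  | AEq u w h => [seq @AEq _ _ vs' (tv s) (tv (cast_ord (congr1 ar h) s)) (sig_cast h s)
                   | s <- enum 'I_(ar (vs u))]
  end.

Lemma scast_eqE (i j : 'I_k) (e : i = j) (x : H i) (y : H j) :
  (@scast _ (fun i => H i) _ _ e x == y) = (tg x == tg y).
Proof. by case: j / e y => y /=; rewrite eq_Tagged. Qed.

Lemma scast_eqM (i j : 'I_k) (e : i = j) (x : ms_sort (mkH Q) i) (y : ms_sort (mkH Q) j) :
  (@scast _ (ms_sort (mkH Q)) _ _ e x == y) = (tg x == tg y).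
Proof. by case: j / e y => y /=; rewrite eq_Tagged. Qed.

Lemma val_scast (i j : 'I_n) (e : i = j) (X : BS i) (s : 'I_(ar j)) :
  tg (val (@scast _ BS _ _ e X) s) = tg (val X (cast_ord (congr1 ar (esym e)) s)).
Proof. by case: j / e s => s /=; rewrite cast_ord_id. Qed.

Lemma scast_eqBS (i j : 'I_n) (e : i = j) (X : BS i) (Y : BS j) :
  (@scast _ BS _ _ e X == Y) =
  [forall s, tg (val X s) == tg (val Y (cast_ord (congr1 ar e) s))].
Proof.
case: j / e Y => Y /=; apply/eqP/forallP => [-> s|h].
  by rewrite cast_ord_id.
apply: val_inj; apply/ffunP => s; apply: tg_inj; apply/eqP.
by have := h s; rewrite cast_ord_id.
Qed.

Lemma arel_sat (a : assign vs) r args h :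
  atom_sat a (@ARel _ _ vs r args h) =
  (tg (val (a (args ord0)) (cast_ord (congr1 ar (esym (h ord0))) (bs n ar r))) ==
   tg (val (a (args ord_max)) (cast_ord (congr1 ar (esym (h ord_max))) (bt n ar r)))).
Proof.
rewrite /= brelE !ffunE.
by rewrite (val_scast (h ord0)) (val_scast (h ord_max)).
Qed.

Lemma tr_sat (t : atom vs) :
  (forall a, all (atom_sat (fl a)) (tr t) = atom_sat a t) \/
  (forall a, atom_sat a t = false).
Proof.
case: t => [r args h|u w h].
  rewrite /tr; case: eqP => [e|ne]; [left|right] => a.
    by rewrite arel_sat /= andbT scast_eqE !flE.
  rewrite arel_sat; apply/negbTE/eqP => /tg_tag; exact: ne.
left => a; rewrite /= scast_eqBS all_map.
apply/allP/forallP => [hh s|hh s _] /=.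
  by have := hh s (mem_enum _ s); rewrite /= scast_eqM !flE.
by rewrite scast_eqM !flE; exact: hh.
Qed.

Definition atoms' : seq (atom vs') :=
  [seq qatom v | v <- enum V] ++ flatten [seq tr t | t <- pd_atoms D].

Definition Phi' (b : assign vs') : bool := all (atom_sat b) atoms'.
Definition Phi (b : assign vs) : bool := all (atom_sat b) (pd_atoms D).

Lemma Phi'_Qok b : Phi' b -> forall v, Qok b v.
Proof.
rewrite /Phi' all_cat => /andP [h _] v.
by move: h; rewrite all_map => /allP /(_ v (mem_enum _ v)).
Qed.

Lemma fl_Qok a v : Qok (fl a) v.
Proof.
rewrite /Qok; have -> : finfun (fun s => fl a (tv s)) = val (a v).
  by apply/ffunP => s; rewrite !ffunE.
exact: valP.
Qed.

Section Good.
Hypothesis good : forall t, List.In t (pd_atoms D) ->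
  forall a, all (atom_sat (fl a)) (tr t) = atom_sat a t.

Lemma Phi'_fl a : Phi' (fl a) = Phi a.
Proof.
rewrite /Phi' all_cat.
have -> : all (atom_sat (fl a)) [seq qatom v | v <- enum V] = true.
  by rewrite all_map; apply/allP => v _; exact: fl_Qok.
rewrite /= /Phi.
elim: (pd_atoms D) good => //= t l IH hg.
by rewrite all_cat hg; [rewrite IH // => t' ht'; apply: hg; right | left].
Qed.

Definition patch (B : {set V}) (b : assign vs) (a' : assign vs') : assign vs' :=
  finfun (fun x => if tag x \in B then fl b x else a' x).

Lemma patchE B b a' x : patch B b a' x = if tag x \in B then fl b x else a' x.
Proof. by rewrite ffunE. Qed.

Definition tB (B : {set V}) : {set V'} := [set x : V' | tag x \in B].

Lemma bs_main bs : (forall v, count (fun B : {set V} => v \in B) bs <= 1) ->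
  (forall (a : assign vs) (a' : assign vs'), (forall x : V', ~~ has (fun B : {set V} => tag x \in B) bs -> fl a x = a' x) ->
     blocks_sat p Phi' (map tB bs) a' = blocks_sat p Phi bs a)
  /\ (forall (a' : assign vs') v, ~~ has (fun B : {set V} => v \in B) bs -> ~~ Qok a' v ->
     blocks_sat p Phi' (map tB bs) a' = false).
Proof.
elim: bs => [|B bs IH] hd.
  split.
    move=> a a' hx /=; have -> : a' = fl a by apply/ffunP => x; rewrite hx.
    exact: Phi'_fl.
  move=> a' v _ hq /=; apply/negbTE; apply: contra hq => h; exact: Phi'_Qok h v.
have hd' : forall v, count (fun B : {set V} => v \in B) bs <= 1.
  move=> v; have := hd v; rewrite /=; case: (v \in B) => //= h; exact: ltnW.
have dis : forall v, v \in B -> ~~ has (fun B : {set V} => v \in B) bs.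
  move=> v vB; have := hd v; rewrite /= vB has_count; case: count => //.
have [IH1 IH2] := IH hd'.
split.
  move=> a a' hx /=.
  pose phi := fun b : assign vs => patch B b a'.
  have phiS : forall b : assign vs, [forall v, (v \notin B) ==> (b v == a v)] ->
      blocks_sat p Phi' (map tB bs) (phi b) = blocks_sat p Phi bs b.
    move=> b /forallP hb; apply: IH1 => x hxb.
    transitivity (if tag x \in B then fl b x else a' x); last by rewrite /phi patchE.
    case: ifP => // hB.
    rewrite -hx /=; last by rewrite hB.
    have := hb (tag x); rewrite hB /= => /eqP e.
    by rewrite !ffunE e.
  set S := [pred b : assign vs | [forall v, (v \notin B) ==> (b v == a v)] && blocks_sat p Phi bs b].
  set S' := [pred b : assign vs' | [forall v, (v \notin tB B) ==> (b v == a' v)] && blocks_sat p Phi' (map tB bs) b].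
  suff -> : #|S'| = #|S| by [].
  have phi_inj : {in S &, injective phi}.
    move=> b1 b2 /andP [/forallP h1 _] /andP [/forallP h2 _] e.
    apply/ffunP => v; case vB: (v \in B).
      apply: val_inj; apply/ffunP => s.
      move/ffunP: e => /(_ (tv s)); by rewrite /phi !patchE /= vB !flE.
    move: (h1 v) (h2 v); rewrite vB /= => /eqP -> /eqP ->. by [].
  rewrite -(card_in_imset phi_inj); apply: eq_card => b'.
  rewrite inE; apply/idP/imsetP.
    case/andP => /forallP hag hbs.
    have hQ : forall v, v \in B -> Qok b' v.
      move=> v vB; apply/negPn/negP => nq.
      by move: hbs; rewrite (IH2 b' v (dis v vB) nq).
    pose b := (finfun (fun v => if v \in B then insubd (a v) (finfun (fun s => b' (tv s))) else a v) : assign vs).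
    have ag : [forall v, (v \notin B) ==> (b v == a v)].
      by apply/forallP => v; apply/implyP => vB; rewrite ffunE (negbTE vB).
    have eb : b' = phi b.
      apply/ffunP => -[v s]; rewrite /phi patchE /=.
      case vB: (v \in B).
        rewrite (flE b s) ffunE vB insubdK; first by rewrite ffunE.
        exact: hQ.
      have hn : tv s \notin tB B by rewrite /tB inE /= vB.
      by move: (hag (tv s)); rewrite hn /= => /eqP.
    exists b; last exact: eb.
    by rewrite /S inE ag /= -phiS // -eb.
  case=> b hb ->; move: hb; rewrite /S inE => /andP [hag hbs].
  rewrite (phiS b hag) hbs andbT; apply/forallP => x; apply/implyP; rewrite /tB inE => hB.
  by rewrite /phi patchE (negbTE hB).
move=> a' v hv hq /=.
move: hv; rewrite /= negb_or => /andP [vB hv].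
set S' := [pred b : assign vs' | _].
suff -> : #|S'| = 0 by rewrite mod0n eqxx.
apply: eq_card0 => b'; rewrite /S' /=; apply/negbTE/negP => /andP [/forallP hag hbs].
suff : Qok b' v = Qok a' v by move=> e; move: hbs; rewrite (IH2 b' v hv) // e.
rewrite /Qok; congr (Q _ _); apply/ffunP => s; rewrite !ffunE.
by have := hag (tv s); rewrite inE /= (negbTE vB) /= => /eqP.
Qed.

End Good.

Local Notation fv := (@pd_fv _ _ D).
Definition FT : finType := {j : 'I_m & 'I_(ar (vs (fv j)))}.

Definition fv' (i : 'I_#|FT|) : V' := tv (tagged (enum_val i : FT)).

Lemma fv'_inj : injective fv'.
Proof.
move=> i1 i2; rewrite /fv' => e; apply: enum_val_inj.
move: (enum_val i1) (enum_val i2) e => [j1 s1] [j2 s2] /= e.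
have ej : fv j1 = fv j2 := congr1 tag e.
have ej' := @pd_fv_inj _ _ D _ _ ej; subst j2.
move/eqP: e; rewrite eq_Tagged /= => /eqP ->; by [].
Qed.

Definition blocks' := map tB (pd_blocks D).

Lemma codom_fv' (x : V') : (x \in codom fv') = (tag x \in codom fv).
Proof.
apply/codomP/codomP => [[i ->]|[j]].
  by exists (tag (enum_val i : FT)).
case: x => v s /= e; subst v.
exists (enum_rank (Tagged (fun j => 'I_(ar (vs (fv j)))) s : FT)).
by rewrite /fv' enum_rankK.
Qed.

Lemma pd_part' (x : V') :
  ((x \in codom fv') : nat) + count (fun B : {set V'} => x \in B) blocks' = 1.
Proof.
rewrite codom_fv' /blocks' count_map -(@pd_part _ _ D (tag x)); congr (_ + _).
by apply: eq_count => B /=; rewrite /tB inE.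
Qed.

Definition D' : ppdef (mkH Q) #|FT| :=
  @PPDef (mkH Q) #|FT| V' vs' fv' blocks' atoms' fv'_inj pd_part'.

Definition flx (x : pd_tup D) : pd_tup D' :=
  finfun (fun i => val (x (tag (enum_val i : FT))) (tagged (enum_val i : FT))).

Lemma hdisj v : count (fun B : {set V} => v \in B) (pd_blocks D) <= 1.
Proof. by move: (@pd_part _ _ D v) => <-; rewrite leq_addl. Qed.

Lemma hfree j : ~~ has (fun B : {set V} => fv j \in B) (pd_blocks D).
Proof.
have := @pd_part _ _ D (fv j); rewrite codom_f /= add1n => /eqP; rewrite eqSS => /eqP hc.
by rewrite has_count hc.
Qed.

Lemma rel_eq (good : forall t, List.In t (pd_atoms D) ->
  forall a, all (atom_sat (fl a)) (tr t) = atom_sat a t) (x : pd_tup D) :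
  pd_rel p x = pd_rel p (flx x).
Proof.
have [B1 B2] := bs_main good hdisj.
apply/existsP/existsP.
  case=> a /andP [/forallP hfv hbs]; exists (fl a); apply/andP; split.
    apply/forallP => i; rewrite /fv' flE ffunE.
    by rewrite (eqP (hfv (tag (enum_val i : FT)))).
  by rewrite /= (B1 a (fl a) (fun _ _ => erefl)).
case=> a' /andP [/forallP hfv hbs].
have [b0 hb0] := blocks_sat_ex hbs.
have hQ0 := Phi'_Qok hb0.
pose a0 := (finfun (fun v => (Sub (finfun (fun s => b0 (tv s))) (hQ0 v) : BS (vs v)))) : assign vs.
pose a := (finfun (fun v => insubd (a0 v) (finfun (fun s => a' (tv s))))) : assign vs.
have hQ : forall v, ~~ has (fun B : {set V} => v \in B) (pd_blocks D) -> Qok a' v.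
  move=> v hv; apply/negPn/negP => nq; move: hbs.
  by rewrite /= (B2 a' v hv nq).
have ag : forall x0 : V', ~~ has (fun B : {set V} => tag x0 \in B) (pd_blocks D) -> fl a x0 = a' x0.
  move=> [v s] /= hv; rewrite flE ffunE insubdK; first by rewrite ffunE.
  exact: hQ.
exists a; apply/andP; split; last first.
  by move: hbs; rewrite /= (B1 a a' ag).
apply/forallP => j; apply/eqP/val_inj/ffunP => s.
have := ag (tv s) (hfree j); rewrite flE => ->.
have hP : forall i : 'I_#|FT|, a' (tv (tagged (enum_val i : FT))) =
    val (x (tag (enum_val i : FT))) (tagged (enum_val i : FT)).
  move=> i; have := hfv i; rewrite ffunE => /eqP; exact.
have := hP (enum_rank (Tagged (fun j => 'I_(ar (vs (fv j)))) s : FT)).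
by rewrite enum_rankK.
Qed.

Lemma In_all (A : Type) (f : A -> bool) (l : seq A) t : List.In t l -> all f l -> f t.
Proof. elim: l => //= u l IH [<-|hi] /andP [h1 h2]; [exact: h1|exact: IH]. Qed.

Lemma atoms_split (l : seq (atom vs)) :
  (forall t, List.In t l -> forall a, all (atom_sat (fl a)) (tr t) = atom_sat a t) \/
  (exists t, List.In t l /\ forall a, atom_sat a t = false).
Proof.
elim: l => [|t l IH]; first by left.
case: (tr_sat t) => ht; last by right; exists t; split=> //; left.
case: IH => [hl|[t' [ht' hb]]]; last by right; exists t'; split=> //; right.
by left => t' [<-|hi]; [exact: ht|exact: hl].
Qed.

Lemma sub0 j (X Y : BS (vs (fv j))) :
  (forall s : 'I_(ar (vs (fv j))), False) -> X = Y.
Proof. move=> h; apply: val_inj; apply/ffunP => s; case: (h s). Qed.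

Lemma rect_transfer : 2 <= m -> strongly_p_rect p (mkH Q) -> rectangular (pd_rel p (D:=D)).
Proof.
move=> hm hH I hI0 hIT t1 t2 t3 t4 h1 h2 r1 r2 r3.
case: (atoms_split (pd_atoms D)) => [hg|[t [ht hbad]]]; last first.
  exfalso; move: r1; rewrite /pd_rel => /existsP [a /andP [_ hb]].
  have [b hPb] := @blocks_sat_ex p (binarize Q) V vs (fun b => all (atom_sat b) (pd_atoms D)) (pd_blocks D) a hb.
  have := @In_all _ (atom_sat b) (pd_atoms D) t ht hPb.
  by rewrite hbad.
pose I' := [set i : 'I_#|FT| | tag (enum_val i : FT) \in I].
have nos : forall j, j \in I -> I' = set0 -> forall s : 'I_(ar (vs (fv j))), False.
  move=> j jI e0 s.
  have : enum_rank (Tagged (fun j => 'I_(ar (vs (fv j)))) s : FT) \in I'.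
    by rewrite inE enum_rankK.
  by rewrite e0 inE.
have noT : forall j, j \notin I -> I' = setT -> forall s : 'I_(ar (vs (fv j))), False.
  move=> j jI e0 s.
  have : enum_rank (Tagged (fun j => 'I_(ar (vs (fv j)))) s : FT) \notin I'.
    by rewrite inE enum_rankK.
  by rewrite e0 inE.
case: (I' =P set0) => [e0|n0].
  have -> : t4 = t2; last exact: r2.
  apply/ffunP => j; case jI: (j \in I).
    by apply: sub0; exact: nos jI e0.
  by case: (h2 j (negbT jI)).
case: (I' =P setT) => [eT|nT].
  have -> : t4 = t3; last exact: r3.
  apply/ffunP => j; case jI: (j \in I).
    by case: (h1 j jI).
  by apply: sub0; exact: noT (negbT jI) eT.
have [i1 hi1] : exists i1, i1 \in I' by apply/set0Pn; apply/eqP.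
have [i2 hi2] : exists i2, i2 \notin I'.
  apply/existsP; rewrite -negb_forall; apply/negP => /forallP h; apply: nT.
  by apply/setP => i; rewrite in_setT h.
have hm' : 2 <= #|FT|.
  have ne : i1 != i2 by apply/eqP => e; move: hi2; rewrite -e hi1.
  have := ltn_ord i1; have := ltn_ord i2.
  move: ne; rewrite -(inj_eq val_inj) /=; lia.
move: r1 r2 r3; rewrite !(rel_eq hg) => r1 r2 r3.
apply: (hH _ D' hm' I' _ _ (flx t1) (flx t2) (flx t3) (flx t4)) => //.
- by apply/eqP.
- by apply/eqP.
- move=> i; rewrite inE => hi; have [e1 e2] := h1 _ hi.
  by rewrite !ffunE e1 e2.
- move=> i; rewrite inE => hi; have [e1 e2] := h2 _ hi.
  by rewrite !ffunE e1 e2.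
Qed.

End Rect.

From Stdlib Require Import ClassicalEpsilon.

Theorem proposition9p2 (k : nat) (H : 'I_k -> finType) (n : nat)
  (ar : 'I_n -> nat) (sig : forall r : 'I_n, 'I_(ar r) -> 'I_k)
  (Q : forall r : 'I_n, pred {dffun forall j : 'I_(ar r), H (sig r j)})
  (p : nat) :
  prime p ->
  (forall i : 'I_k, exists r : 'I_n,
      ar r = 1 /\ (forall j, sig r j = i) /\ (forall x, Q r x)) ->
  [/\ has_maltsev (mkH Q) <-> has_maltsev (binarize Q),
      p_rigid p (mkH Q) <-> p_rigid p (binarize Q)
    & strongly_p_rect p (mkH Q) -> strongly_p_rect p (binarize Q)].
Proof.
move=> pp hun.
pose ur := fun i => proj1_sig (constructive_indefinite_description _ (hun i)).
have hur : forall i, ar (ur i) = 1 /\ (forall j, sig (ur i) j = i) /\ (forall x, Q (ur i) x).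
  move=> i; exact: (proj2_sig (constructive_indefinite_description _ (hun i))).
have hur1 : forall i, ar (ur i) = 1 by move=> i; case: (hur i).
have hur2 : forall i j, sig (ur i) j = i by move=> i; case: (hur i) => _ [].
have hur3 : forall i x, Q (ur i) x by move=> i; case: (hur i) => _ [].
split.
- split; [exact: malt_HtoB | exact: (malt_BtoH hur1 hur2 hur3)].
- split => h1 h2; apply: h1.
    exact: (rigid_BtoH hur1 hur2 hur3 pp).
  exact: (rigid_HtoB hur1 hur2 hur3 pp).
- move=> hH m D hm; exact: rect_transfer.
Qed.
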